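(* Let $g,h$ be formal letters with $g\not\equiv h$. For every $n\ge1$, every cyclic subword of the iterated commutator word $[g,h]_n$ of length at least four is magic in $g$ and $h$.
   Context: Iterated commutator words in the free group on $g,h$: $[g,h]_1:=gh^{-1}g^{-1}h$, and for $n\ge 2$, $[g,h]_n$ is the reduced form of $g\,[g,h]_{n-1}^{-1}\,g^{-1}\,[g,h]_{n-1}$. A cyclic permutation of a word $a_1\cdots a_n$ is a word $a_k\cdots a_na_1\cdots a_{k-1}$ for some $k\in[n]$. A word $u$ is a cyclic subword of $w$ if $u$ or $u^{-1}$ is a contiguous subword of some cyclic permutation of $w$; a linear subword is a contiguous subword. A word $u$ is magic in $g$ and $h$ if $u$ and $u^{-1}$ together contain at least three of the four words $gh$, $hg$, $g^{-1}h$, $hg^{-1}$ as linear subwords. *)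

(* Defs.v *)
From HB Require Import structures.
From mathcomp Require Import all_boot.
Set Implicit Arguments. Unset Strict Implicit. Unset Printing Implicit Defensive.

(* Letters g, g^-1, h, h^-1 (g and h are distinct formal letters). *)
Inductive letter := Lg | Lgi | Lh | Lhi.

Definition letter_code (x : letter) : nat :=
  match x with Lg => 0 | Lgi => 1 | Lh => 2 | Lhi => 3 end.
Definition letter_decode (n : nat) : letter :=
  match n with 0 => Lg | 1 => Lgi | 2 => Lh | _ => Lhi end.
Lemma letter_codeK : cancel letter_code letter_decode.
Proof. by case. Qed.
HB.instance Definition _ := Equality.copy letter (can_type letter_codeK).

Definition inv_letter (x : letter) : letter :=
  match x with Lg => Lgi | Lgi => Lg | Lh => Lhi | Lhi => Lh end.

Definition word := seq letter.

Definition inv_word (w : word) : word := rev (map inv_letter w).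

Definition reduce (w : word) : word :=
  foldr (fun x acc => match acc with
                      | y :: t => if y == inv_letter x then t else x :: acc
                      | [::] => [:: x]
                      end) [::] w.

Fixpoint comm (n : nat) : word :=
  match n with
  | 0 | 1 => [:: Lg; Lhi; Lgi; Lh]
  | (m.+1) as k => let c := comm m in
                   reduce ([:: Lg] ++ inv_word c ++ [:: Lgi] ++ c)
  end.

Definition linear_subword (u w : word) : bool := infix u w.

Definition cyclic_subword (u w : word) : Prop :=
  exists k, k < size w /\
    (linear_subword u (rot k w) \/ linear_subword (inv_word u) (rot k w)).

Definition magic_tests : seq word :=
  [:: [:: Lg; Lh]; [:: Lh; Lg]; [:: Lgi; Lh]; [:: Lh; Lgi]].

Definition magic (u : word) : Prop :=
  3 <= count (fun t => linear_subword t u || linear_subword t (inv_word u)) magic_tests.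

(* Main.v *)
Require Import Defs.
From mathcomp Require Import all_boot zify.

Set Implicit Arguments. Unset Strict Implicit. Unset Printing Implicit Defensive.

Definition W : seq word :=
  [:: [:: Lgi; Lhi; Lgi; Lh]; [:: Lgi; Lhi; Lg; Lh]; [:: Lgi; Lh; Lgi; Lhi];
      [:: Lgi; Lh; Lg; Lhi]; [:: Lhi; Lgi; Lh; Lgi]; [:: Lhi; Lgi; Lh; Lg];
      [:: Lhi; Lg; Lh; Lgi]; [:: Lhi; Lg; Lh; Lg]; [:: Lg; Lhi; Lgi; Lh];
      [:: Lg; Lhi; Lg; Lh]; [:: Lg; Lh; Lgi; Lhi]; [:: Lg; Lh; Lg; Lhi];
      [:: Lh; Lgi; Lhi; Lgi]; [:: Lh; Lgi; Lhi; Lg]; [:: Lh; Lg; Lhi; Lgi];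
      [:: Lh; Lg; Lhi; Lg]].

Definition good4 (s : word) : bool :=
  (match s with x :: y :: _ => y != inv_letter x | _ => true end) &&
  ((size s < 4) || (s \in W)).

Fixpoint ok (w : word) : bool :=
  match w with
  | [::] => true
  | x :: r => good4 (take 4 (x :: r)) && ok r
  end.

Lemma take3_cat (a b : word) :
  take 3 (a ++ b) = take 3 (a ++ take 3 b).
Proof.
rewrite !take_cat; case: ifP => // _.
by rewrite take_takel // leq_subr.
Qed.

Lemma ok_catl (a b : word) : 3 <= size b ->
  ok (a ++ take 3 b) -> ok b -> ok (a ++ b).
Proof.
move=> hb; elim: a => [|x a IH] //= /andP [h1 h2] h3.
rewrite IH // andbT; move: h1.
by rewrite [in X in _ -> X]take3_cat.
Qed.

Definition lastk (a : word) := drop (size a - 3) a.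

Lemma ok_catr (a b : word) : 3 <= size a ->
  ok a -> ok (lastk a ++ b) -> ok (a ++ b).
Proof.
elim: a => [|x a IH] //= ha /andP [h1 h2] h3.
case: (ltnP (size a) 3) => hs.
  have e : size a = 2 by move: ha hs; rewrite /=; lia.
  by move: h3; rewrite /lastk /= e subnn drop0.
apply/andP; split.
  by rewrite takel_cat.
apply: IH => //.
by move: h3; rewrite /lastk /= subSn.
Qed.

Definition step (x : letter) (acc : word) : word :=
  match acc with
  | y :: t => if y == inv_letter x then t else x :: acc
  | [::] => [:: x]
  end.

Lemma reduceE (w : word) : reduce w = foldr step [::] w.
Proof. by []. Qed.

Fixpoint reduced (w : word) : bool :=
  match w with
  | x :: ((y :: _) as r) => (y != inv_letter x) && reduced r
  | _ => true
  end.

Lemma red_from (a acc : word) : reduced (a ++ acc) -> foldr step acc a = a ++ acc.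
Proof.
elim: a => [|x a IH] //= h.
have h' : reduced (a ++ acc).
  by move: h; case: (a ++ acc) => [|y t] // /andP [].
rewrite IH //; move: h; case: (a ++ acc) => [|y t] //= /andP [h _].
by rewrite (negbTE h).
Qed.

Lemma ok_reduced (w : word) : ok w -> reduced w.
Proof.
elim: w => [|x w IH] //= /andP [h1 h2].
have := IH h2; case: w h1 {IH h2} => [|y w] //= /andP [-> _] ->.
done.
Qed.

Lemma inv_letterK : involutive inv_letter.
Proof. by case. Qed.

Lemma inv_wordK : involutive inv_word.
Proof.
by move=> w; rewrite /inv_word map_rev revK (mapK inv_letterK).
Qed.

Lemma inv_word_cat (a b : word) : inv_word (a ++ b) = inv_word b ++ inv_word a.
Proof. by rewrite /inv_word map_cat rev_cat. Qed.

Lemma inv_word_cons x (a : word) : inv_word (x :: a) = inv_word a ++ [:: inv_letter x].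
Proof. by rewrite -cat1s inv_word_cat. Qed.

Definition P := [:: Lhi; Lg; Lh].
Definition S := [:: Lhi; Lgi; Lh].

Definition inv_ok (m : word) := ok (P ++ m ++ S) && ok (P ++ inv_word m ++ S).

Lemma glue (X Y : word) x : 3 <= size X -> lastk X = S ->
  ok X -> ok (P ++ Y) -> ok (S ++ x :: P) -> ok (X ++ x :: P ++ Y).
Proof.
move=> hX hl oX oY oB.
apply: ok_catr => //; rewrite hl.
rewrite -cat1s catA.
apply: ok_catl => //; rewrite ?size_cat //.
by rewrite takel_cat // -catA.
Qed.

Lemma lastkS (m : word) : lastk (P ++ m ++ S) = S.
Proof.
by rewrite /lastk catA size_cat addnK drop_size_cat.
Qed.

Lemma inv_ok_step (m : word) : inv_ok m ->
  inv_ok (inv_word m ++ S ++ Lgi :: P ++ m).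
Proof.
move=> /andP [o1 o2]; apply/andP; split.
  have -> : P ++ (inv_word m ++ S ++ Lgi :: P ++ m) ++ S =
    (P ++ inv_word m ++ S) ++ Lgi :: P ++ (m ++ S) by rewrite -!catA.
  by apply: glue; rewrite ?lastkS ?size_cat.
have -> : inv_word (inv_word m ++ S ++ Lgi :: P ++ m) = inv_word m ++ S ++ Lg :: P ++ m.
  rewrite -cat1s !inv_word_cat inv_wordK -!catA; congr (_ ++ _).
have -> : P ++ (inv_word m ++ S ++ Lg :: P ++ m) ++ S =
  (P ++ inv_word m ++ S) ++ Lg :: P ++ (m ++ S) by rewrite -!catA.
by apply: glue; rewrite ?lastkS ?size_cat.
Qed.

Lemma comm_struct (n : nat) : exists m, comm n.+2 = Lg :: P ++ m ++ S /\ inv_ok m.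
Proof.
elim: n => [|n [m [e hm]]].
  by exists [:: Lgi].
exists (inv_word m ++ S ++ Lgi :: P ++ m); split; last exact: inv_ok_step.
have -> : comm n.+3 = reduce ([:: Lg] ++ inv_word (comm n.+2) ++ [:: Lgi] ++ comm n.+2).
  by [].
rewrite e; set Y := P ++ m ++ S.
have oY : ok Y by case/andP: hm.
have hinvY : inv_word Y = P ++ inv_word m ++ S.
  by rewrite /Y !inv_word_cat.
have -> : [:: Lg] ++ inv_word (Lg :: Y) ++ [:: Lgi] ++ Lg :: Y =
  (Lg :: inv_word Y ++ [:: Lgi]) ++ (Lgi :: Lg :: Y).
  by rewrite inv_word_cons /= -!catA.
rewrite reduceE foldr_cat.
have -> : foldr step [::] (Lgi :: Lg :: Y) = Y.
  have hY : foldr step [::] Y = Y.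
    by rewrite red_from cats0 // ok_reduced.
  change (step Lgi (step Lg (foldr step [::] Y)) = Y); rewrite hY /Y /=.
  by [].
have oB : ok (Lg :: P ++ (inv_word m ++ S ++ Lgi :: P ++ m) ++ S).
  have := inv_ok_step hm; case/andP => h _.
  have := @ok_catl [:: Lg] (P ++ (inv_word m ++ S ++ Lgi :: P ++ m) ++ S).
  rewrite takel_cat //; apply => //.
have eq : (Lg :: inv_word Y ++ [:: Lgi]) ++ Y =
   Lg :: P ++ (inv_word m ++ S ++ Lgi :: P ++ m) ++ S.
  by rewrite hinvY /Y /= -!catA.
by rewrite red_from eq // -eq ok_reduced // eq.
Qed.

Lemma ok_comm (n : nat) : 1 <= n -> ok (comm n ++ comm n).
Proof.
case: n => [|[|n]] // _.
have [m [-> /andP [h _]]] := comm_struct n.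
set Y := P ++ m ++ S.
have -> : (Lg :: Y) ++ Lg :: Y = [:: Lg] ++ (Y ++ Lg :: Y) by [].
have sY : 3 <= size Y by rewrite /Y size_cat.
have tY : forall Z, take 3 (Y ++ Z) = P.
  by move=> Z; rewrite /Y -!catA takel_cat.
apply: ok_catl; rewrite ?size_cat ?tY //.
apply: ok_catr; rewrite ?lastkS //.
rewrite -cat1s catA; apply: ok_catl; rewrite ?tY //.
by rewrite -(cats0 Y) tY.
Qed.

Lemma ok_infix (w u : word) : ok w -> size u = 4 -> infix u w -> u \in W.
Proof.
move=> + hu; elim: w => [|x w IH].
  by move=> _; case: u hu.
rewrite infix_consl => /andP [h1 h2] /orP [hp|]; last exact: IH.
move: hp; rewrite prefixE hu => /eqP e.
move: h1; rewrite e => /andP [_]; rewrite hu. done.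
Qed.

Lemma infix_inv (a b : word) : infix a b -> infix (inv_word a) (inv_word b).
Proof.
move=> /infixP [s [s' ->]].
rewrite !inv_word_cat -catA. exact: infix_infix.
Qed.

Lemma magic_mono (a b : word) : infix a b -> magic a -> magic b.
Proof.
move=> hab; rewrite /magic => h; apply: leq_trans h _.
apply: sub_count => t /orP [h|h]; apply/orP.
  by left; apply: infix_trans h hab.
by right; apply: infix_trans h (infix_inv hab).
Qed.

Lemma magic_inv (a : word) : magic (inv_word a) -> magic a.
Proof.
rewrite /magic inv_wordK.
by under eq_count => t do rewrite orbC.
Qed.

Lemma W_magic (u : word) : u \in W -> magic u.
Proof.
have h : all (fun u => 3 <= count (fun t => linear_subword t u || linear_subword t (inv_word u)) magic_tests) W.
  by vm_compute.
exact: (allP h).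
Qed.

Lemma rot_infix (k : nat) (w : word) : infix (rot k w) (w ++ w).
Proof.
have -> : w ++ w = take k w ++ rot k w ++ drop k w.
  by rewrite /rot !catA cat_take_drop -catA cat_take_drop.
exact: infix_infix.
Qed.

Lemma key (n : nat) (u : word) (k : nat) : 1 <= n -> 4 <= size u ->
  infix u (rot k (comm n)) -> magic u.
Proof.
move=> hn hu hi.
have h4 : infix (take 4 u) u by rewrite -{2}(cat_take_drop 4 u) prefix_infix.
apply: (magic_mono h4); apply: W_magic.
apply: (ok_infix (ok_comm hn)).
  rewrite size_take; case: ltnP => h; move: hu h; try lia.
exact: infix_trans (infix_trans h4 hi) (rot_infix _ _).
Qed.

Theorem lemma3p14 (n : nat) (u : word) :
  1 <= n -> 4 <= size u -> cyclic_subword u (comm n) -> magic u.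
Proof.
move=> hn hu [k [_ [h|h]]]; first exact: key h.
apply: magic_inv; apply: key h => //.
by rewrite /inv_word size_rev size_map.
Qed.
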